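(* Let $G=(V,E)$ be a graph with $n$ vertices and maximum degree $\Delta$, and let $l_v\in\{0,1\}$, $v\in V$, be parities with $\sum_{v\in V} l_v \equiv 1 \pmod 2$. Let $\Phi$ be the corresponding Tseitin formula and $K\subseteq[0,1]^E$ its SAT polytope. Then $\Phi$ has a cutting plane refutation of length $2^\Delta (n\Delta)^{O(\log n)}$, i.e., there is a list $\mathcal{L}=(\mathbf{a}_1,\dots,\mathbf{a}_N)$ of vectors in $\mathbb{Z}^E$ with $\mathrm{CG}(K,\mathcal{L})=\emptyset$ and $N \le 2^\Delta (n\Delta)^{c\log n}$ for an absolute constant $c$.
   Context: The Tseitin formula $\Phi$ has Boolean variables $x_e$, $e\in E$; for each vertex $v$ with incident edge set $\delta(v)$ it contains, for every assignment $\boldsymbol\alpha\in\{0,1\}^{\delta(v)}$ with $\sum_{e\in\delta(v)}\alpha_e\not\equiv l_v \pmod 2$, the clause excluding $\boldsymbol\alpha$ (the disjunction of $x_e$ over $e$ with $\alpha_e=0$ and $\bar x_e$ over $e$ with $\alpha_e=1$). Thus $\mathbf{x}\in\{0,1\}^E$ satisfies $\Phi$ iff $\sum_{e\ni v}x_e\equiv l_v \pmod 2$ for all $v$. For a CNF formula with clauses $C_j=\bigvee_{i\in L_j}x_i\vee\bigvee_{i\in\bar L_j}\bar x_i$, its SAT polytope is $\{\mathbf{x}: \sum_{i\in L_j}x_i+\sum_{i\in\bar L_j}(1-x_i)\ge 1\ \forall j,\ 0\le x_i\le 1\ \forall i\}$. Support function: $h_K(\mathbf{a})=\sup_{\mathbf{x}\in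 K}\mathbf{a}\mathbf{x}$, with $h_\emptyset\equiv-\infty$. For $\mathbf{a}\in\mathbb{Z}^n$, $\mathrm{CG}(K,\mathbf{a}) := K\cap\{\mathbf{x}:\mathbf{a}\mathbf{x}\le\lfloor h_K(\mathbf{a})\rfloor\}$ (the Chvátal–Gomory cut induced by $\mathbf{a}$); for a list, $\mathrm{CG}(K,(\mathbf{a}_1,\dots,\mathbf{a}_k)) := \mathrm{CG}(\mathrm{CG}(K,\mathbf{a}_1),(\mathbf{a}_2,\dots,\mathbf{a}_k))$ and $\mathrm{CG}(K,\emptyset)=K$. A cutting plane refutation of length $N$ is a list of $N$ integer vectors $\mathcal{L}$ with $\mathrm{CG}(K,\mathcal{L})=\emptyset$. *)

(* Defs.v *)
From HB Require Import structures.
From mathcomp Require Import all_boot all_order all_algebra.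
From mathcomp Require Import all_classical all_reals.
From mathcomp Require Import exp.
Set Implicit Arguments. Unset Strict Implicit. Unset Printing Implicit Defensive.
Import Order.TTheory GRing.Theory Num.Theory.
Local Open Scope ring_scope.

Definition simple_graph (V : finType) (adj : rel V) : Prop :=
  symmetric adj /\ irreflexive adj.

Definition is_edge (V : finType) (adj : rel V) (s : {set V}) : bool :=
  [exists u, exists v, adj u v && (s == [set u; v])].

Definition edge (V : finType) (adj : rel V) : finType :=
  {s : {set V} | is_edge adj s}.

Definition incident (V : finType) (adj : rel V) (v : V) : {set edge adj} :=
  [set e : edge adj | v \in val e].

Definition degree (V : finType) (adj : rel V) (v : V) : nat :=
  #|incident adj v|.

Definition max_degree (V : finType) (adj : rel V) : nat :=
  (\max_(v : V) degree adj v)%N.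

(* A clause over variables indexed by the finite type I: (L, Lbar), i.e.
   the disjunction of x_i (i in L) and of the negations of x_i (i in Lbar).
   A CNF formula is a finite set of clauses. *)
Definition clause (I : finType) := ({set I} * {set I})%type.
Definition cnf (I : finType) := {set clause I}.

(* An assignment alpha in {0,1}^{delta(v)} is represented by the set
   A = {e in delta(v) | alpha_e = 1}; sum alpha_e = #|A|.  The clause
   excluding alpha has positive literals delta(v) \ A and negative ones A. *)
Definition tseitin (V : finType) (adj : rel V) (l : V -> bool) : cnf (edge adj) :=
  [set C : clause (edge adj) | [exists v : V, exists A : {set edge adj},
     [&& A \subset incident adj v, odd #|A| != l v &
         C == (incident adj v :\: A, A)]]].

Local Open Scope classical_set_scope.

Definition sat_polytope (R : realType) (I : finType) (F : cnf I) : set (I -> R) :=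
  [set x | (forall C, C \in F ->
              1 <= \sum_(i in C.1) x i + \sum_(i in C.2) (1 - x i))
           /\ (forall i, 0 <= x i <= 1)].

Definition dotz (R : realType) (I : finType) (a : I -> int) (x : I -> R) : R :=
  \sum_(i : I) (a i)%:~R * x i.

(* Support function h_K(a) = sup_{x in K} a x.  (For K empty the value is
   irrelevant below, since the cut is intersected with K.) *)
Definition support_fun (R : realType) (I : finType) (K : set (I -> R))
  (a : I -> int) : R :=
  sup [set dotz a x | x in K].

Definition CG (R : realType) (I : finType) (K : set (I -> R)) (a : I -> int)
  : set (I -> R) :=
  [set x | K x /\ dotz a x <= (Num.floor (support_fun K a))%:~R].

Definition CG_list (R : realType) (I : finType) (K : set (I -> R))
  (L : seq (I -> int)) : set (I -> R) :=
  foldl (@CG R I) K L.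

(* Main.v *)
Require Import Defs.
From HB Require Import structures.
From mathcomp Require Import all_boot all_order all_algebra.
From mathcomp Require Import all_classical all_reals.
From mathcomp Require Import exp.
From mathcomp Require Import topology normedtype.
From mathcomp Require Import ring lra zify.
Import Order.TTheory GRing.Theory Num.Theory.
Import numFieldNormedType.Exports.
Import ArrowAsProduct.
Set Implicit Arguments. Unset Strict Implicit. Unset Printing Implicit Defensive.
Local Open Scope ring_scope.
Local Open Scope classical_set_scope.


Section Key.
Variables (R : realType) (E : finType).
Definition PT := (E -> R).
HB.instance Definition _ := Topological.on PT.
HB.instance Definition _ := isPointed.Build PT (fun _ => 0).
Definition box : set (E -> R) := [set x | forall i, 0 <= x i <= 1].
Definition lin (a : E -> R) (x : E -> R) : R := \sum_i a i * x i.

Lemma lin_cont_seq (a : E -> R) (s : seq E) :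
  continuous (fun x : PT => \sum_(i <- s) a i * x i).
Proof.
elim: s => [|i s IH].
  have -> : (fun x : PT => \sum_(i <- [::]) a i * x i) = cst 0.
    by apply: funext => y; rewrite big_nil.
  exact: cst_continuous.
have -> : (fun x0 : PT => \sum_(j <- i :: s) a j * x0 j) =
  ((fun x0 : PT => a i * x0 i) + (fun x0 : PT => \sum_(j <- s) a j * x0 j)).
  by apply: funext => y; rewrite big_cons.
move=> x; apply: continuousD; last exact: IH.
apply: continuousM; first exact: cst_continuous.
exact: (@proj_continuous E (fun _ => R) i).
Qed.

Lemma lin_cont (a : E -> R) : continuous (fun x : PT => lin a x).
Proof. exact: lin_cont_seq. Qed.

Lemma box_compact : compact (box : set PT).
Proof.
have -> : (box : set PT) = [set f | forall i : E, `[(0:R), 1] (f i)].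
  by apply: funext => f; apply: propext; split => H i;
    move: (H i); rewrite /= in_itv.
exact: (@tychonoff E (fun _ => R) (fun _ => `[0, 1]) (fun _ => @segment_compact R 0 1)).
Qed.

Lemma lin_box (a x : E -> R) : box x -> lin a x <= \sum_i `|a i|.
Proof.
move=> bx; apply: ler_sum => i _.
apply: le_trans (ler_norm _) _; rewrite normrM.
have /andP[h0 h1] := bx i.
by rewrite -[X in _ <= X]mulr1 ler_wpM2l // ger0_norm.
Qed.

Lemma closed_ge_lin (f : PT -> R) (g : R) : continuous f ->
  closed [set x : PT | g <= f x].
Proof.
move=> fc.
have -> : [set x : PT | g <= f x] = f @^-1` [set y | g <= y] by [].
apply: preimage_closed; last exact: closed_ge.
by move=> x _; apply: fc.
Qed.

Lemma key (B : set (E -> R)) (a c : E -> R) (k g0 g1 : R) :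
  closed (B : set PT) -> B `<=` box ->
  (forall x, B x -> lin a x <= k) ->
  (forall x, B x -> lin a x = k -> lin c x <= g0) -> g0 < g1 ->
  exists n : nat, forall x, B x -> lin c x + n%:R * (lin a x - k) <= g1.
Proof.
move=> Bcl Bbox Ha Hc g01.
apply: contrapT => Hn.
have Hn' : forall n : nat, exists x, B x /\ g1 < lin c x + n%:R * (lin a x - k).
  move=> n; apply: contrapT => H1; apply: Hn; exists n => x Bx.
  rewrite leNgt; apply/negP => H2; apply: H1; by exists x.
pose f := fun n : nat => [set x : PT | B x /\ g1 <= lin c x + n%:R * (lin a x - k)].
have mono : forall x, B x -> forall m n : nat, (m <= n)%N ->
    lin c x + n%:R * (lin a x - k) <= lin c x + m%:R * (lin a x - k).
  move=> x Bx m n mn; rewrite lerD2l ler_wnM2r ?ler_nat //.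
  by rewrite subr_le0 Ha.
have : \bigcap_(i in [set: nat]) f i !=set0.
  have := box_compact; rewrite compact_In0 => /(_ nat setT f); apply.
    exists (fun n => [set x : PT | B x] `&` [set x : PT | g1 <= lin c x + n%:R * (lin a x - k)]).
      move=> n _; apply: closedI; first exact: Bcl.
      apply: closed_ge_lin.
      have -> : (fun x : PT => lin c x + n%:R * (lin a x - k)) =
          lin (fun i => c i + n%:R * a i) \- cst (n%:R * k).
        apply: funext => x; rewrite /lin /= mulrBr addrA; congr (_ - _).
        rewrite mulr_sumr -big_split; apply: eq_bigr => i _.
        by rewrite mulrDl mulrA.
      move=> x; apply: continuousB; first exact: lin_cont.
      exact: cst_continuous.
    move=> n _; apply: funext => x; apply: propext; split.
      by move=> [Bx H]; split; [apply: Bbox | split].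
    by move=> [_ [Bx H]].
  move=> D' _.
  pose N := (\max_(i <- finmap.enum_fset D') i)%N.
  have [x [Bx Hx]] := Hn' N.
  exists x => i; rewrite /= => iD; split => //.
  apply: le_trans (ltW Hx) _; apply: mono => //.
  exact: leq_bigmax_seq.
move=> [p Hp].
have [Bp H0] := Hp 0%N I.
have [ak|akn] := eqVneq (lin a p) k.
  have := Hc p Bp ak; rewrite mul0r addr0 in H0.
  by move=> h; have := lt_le_trans g01 H0; rewrite ltNge h.
have ak : lin a p < k by rewrite lt_neqAle akn Ha.
set d := k - lin a p.
have d0 : 0 < d by rewrite subr_gt0.
set C := \sum_i `|c i| - g1.
have Cb : lin c p - g1 <= C by rewrite lerD2r lin_box //; apply: Bbox.
have [N HN] : exists N : nat, C / d < N%:R.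
  by exists (Num.truncn (C / d)).+1; apply: truncnS_gt.
have [_ HNp] := Hp N I.
have e : N%:R * (lin a p - k) = - (N%:R * d) by rewrite -mulrN opprB.
rewrite e in HNp.
have h1 : N%:R * d <= lin c p - g1 by lra.
have : C < N%:R * d by rewrite -ltr_pdivrMr.
by rewrite ltNge (le_trans h1 Cb).
Qed.
End Key.


Section Frame.
Variables (R : realType) (E : finType).
Local Notation PT := (PT R E).
Local Notation box := (@box R E).

Definition zr (a : E -> int) : E -> R := fun i => (a i)%:~R.

Lemma dotz_lin a x : dotz a x = lin (zr a) x. Proof. by []. Qed.

Lemma has_ub_dotz (P : set (E -> R)) a : P `<=` box ->
  has_ubound [set dotz a x | x in P].
Proof.
move=> Pb; exists (\sum_i `|zr a i|) => y [x Px <-].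
by rewrite dotz_lin; apply: lin_box; apply: Pb.
Qed.

Lemma sup_ub (P : set (E -> R)) a x : P `<=` box -> P x ->
  dotz a x <= support_fun P a.
Proof.
move=> Pb Px; apply: (ub_le_sup (has_ub_dotz a Pb)).
by exists x.
Qed.

Lemma sup_le (P : set (E -> R)) a b : (exists x, P x) ->
  (forall x, P x -> dotz a x <= b) -> support_fun P a <= b.
Proof.
move=> [x Px] H; apply: ge_sup; first by exists (dotz a x), x.
by move=> y [z Pz <-]; apply: H.
Qed.

Lemma CG_sub (P : set (E -> R)) a : CG P a `<=` P.
Proof. by move=> x []. Qed.

Lemma CG_mono (P Q : set (E -> R)) a : P `<=` Q -> Q `<=` box ->
  CG P a `<=` CG Q a.
Proof.
move=> PQ Qb x [Px Hx]; split; first exact: PQ.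
apply: le_trans Hx _; rewrite ler_int; apply: le_floor.
apply: sup_le; first by exists x.
by move=> y Py; apply: sup_ub => //; apply: PQ.
Qed.

Lemma CGl_sub (P : set (E -> R)) L : CG_list P L `<=` P.
Proof.
elim: L P => [|a L IH] P //=.
by move=> x /IH /CG_sub.
Qed.

Lemma CGl_mono (P Q : set (E -> R)) L : P `<=` Q -> Q `<=` box ->
  CG_list P L `<=` CG_list Q L.
Proof.
elim: L P Q => [|a L IH] P Q PQ Qb //=.
apply: IH; first exact: CG_mono.
by move=> x /CG_sub /Qb.
Qed.

Lemma CGl_cat (P : set (E -> R)) L1 L2 :
  CG_list P (L1 ++ L2) = CG_list (CG_list P L1) L2.
Proof. by rewrite /CG_list foldl_cat. Qed.

Lemma CGl_cons (P : set (E -> R)) a L :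
  CG_list P (a :: L) = CG_list (CG P a) L.
Proof. by []. Qed.

Lemma closed_dotz_le a (t : R) : closed ([set x | dotz a x <= t] : set PT).
Proof.
have -> : ([set x | dotz a x <= t] : set PT) =
   (fun x : PT => lin (zr a) x) @^-1` [set y | y <= t] by [].
apply: preimage_closed; last exact: closed_le.
by move=> x _; apply: lin_cont.
Qed.

Lemma closed_dotz_eq a (t : R) : closed ([set x | dotz a x = t] : set PT).
Proof.
have -> : ([set x | dotz a x = t] : set PT) =
   (fun x : PT => lin (zr a) x) @^-1` [set y | y = t] by [].
apply: preimage_closed; last exact: closed_eq.
by move=> x _; apply: lin_cont.
Qed.

Lemma CG_closed (P : set (E -> R)) a : closed (P : set PT) ->
  closed (CG P a : set PT).
Proof.
move=> Pc.
have -> : (CG P a : set PT) = (P : set PT) `&`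
   [set x | dotz a x <= (Num.floor (support_fun P a))%:~R] by [].
by apply: closedI => //; apply: closed_dotz_le.
Qed.

Lemma CGl_closed (P : set (E -> R)) L : closed (P : set PT) ->
  closed (CG_list P L : set PT).
Proof.
elim: L P => [|a L IH] P Pc //=.
by apply: IH; apply: CG_closed.
Qed.

Definition Refutable (P : set (E -> R)) (N : nat) :=
  exists L, (size L <= N)%N /\ CG_list P L = set0.

Lemma ref_mono (P Q : set (E -> R)) N : P `<=` Q -> Q `<=` box ->
  Refutable Q N -> Refutable P N.
Proof.
move=> PQ Qb [L [sL HL]]; exists L; split => //.
apply/seteqP; split => // x Hx.
by rewrite -HL; apply: (CGl_mono PQ Qb).
Qed.

Lemma ref_le (P : set (E -> R)) N N' : (N <= N')%N ->
  Refutable P N -> Refutable P N'.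
Proof.
by move=> NN [L [sL HL]]; exists L; split => //; apply: leq_trans NN.
Qed.

Lemma ref_empty (P : set (E -> R)) N : (forall x, ~ P x) -> Refutable P N.
Proof.
move=> H; exists [::]; split => //.
by apply/seteqP; split => // x /H.
Qed.

Lemma dotz_add (c a : E -> int) (n : nat) (x : E -> R) :
  dotz (fun i => c i + n%:Z * a i) x = dotz c x + n%:R * dotz a x.
Proof.
rewrite /dotz mulr_sumr -big_split; apply: eq_bigr => i _ /=.
by rewrite intrD intrM mulrDl mulrA.
Qed.

Lemma lin0 (x : E -> R) : lin (fun=> 0) x = 0.
Proof. by rewrite /lin big1 // => i _; rewrite mul0r. Qed.

Lemma face_lemma (B : set (E -> R)) (a : E -> int) (k : int) L :
  closed (B : set PT) -> B `<=` box ->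
  (forall x, B x -> dotz a x <= k%:~R) ->
  CG_list (B `&` [set x | dotz a x = k%:~R]) L = set0 ->
  exists L', size L' = (size L).+1 /\
    (forall x, CG_list B L' x -> dotz a x <= (k - 1)%:~R).
Proof.
elim: L B => [|c L IH] B Bc Bb Ha HL.
  exists [:: a]; split => // x /= [Bx Hx].
  apply: le_trans Hx _; rewrite ler_int.
  have Hface : forall y, B y -> dotz a y = k%:~R -> lin (fun=> 0) y <= -1.
    move=> y By Hy; have : (B `&` [set x | dotz a x = k%:~R]) y by [].
    by rewrite /= in HL; rewrite HL.
  have lt12 : (-1 : R) < -(1/2) by lra.
  have [n Hn] := key Bc Bb Ha Hface lt12.
  have n0 : (0 < n)%N.
    rewrite lt0n; apply/eqP => n0; have := Hn x Bx.
    by rewrite n0 mul0r addr0 lin0; lra.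
  have Hs : support_fun B a <= k%:~R - 1 / (2 * n%:R).
    apply: sup_le; first by exists x.
    move=> y By; have := Hn y By.
    rewrite lin0 add0r.
    have np : (0 : R) < n%:R by rewrite ltr0n.
    rewrite dotz_lin => h.
    rewrite lerBrDr -lerBrDl.
    rewrite -(ler_pM2l np) mulrBr.
    have -> : n%:R * (1 / (2 * n%:R)) = 1 / 2 :> R.
      by field; rewrite pnatr_eq0 -lt0n.
    lra.
  rewrite -ltzD1 subrK floor_lt_int.
  apply: le_lt_trans Hs _.
  rewrite ltrBlDr ltrDl divr_gt0 // mulr_gt0 // ltr0n //.
set F := B `&` [set x | dotz a x = k%:~R].
have Fb : F `<=` box by move=> x [/Bb].
set g0 := support_fun F c.
set g1 := (g0 + ((Num.floor g0)%:~R + 1)) / 2.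
have hg0 : g0 < (Num.floor g0)%:~R + 1 by rewrite -intrD1 floorD1_gt.
have g01 : g0 < g1 by rewrite /g1; lra.
have g1f : g1 < (Num.floor g0)%:~R + 1 by rewrite /g1; lra.
have Hface : forall x, B x -> lin (zr a) x = k%:~R -> lin (zr c) x <= g0.
  by move=> x Bx Hx; rewrite -dotz_lin; apply: sup_ub => //; split.
have [n Hn] := key Bc Bb Ha Hface g01.
set v := fun i => c i + n%:Z * a i.
set B1 := CG B v.
have B1b : B1 `<=` box by move=> x /CG_sub /Bb.
have sub : B1 `&` [set x | dotz a x = k%:~R] `<=` CG F c.
  move=> x [[Bx Hv] Hax]; split; first by split.
  have Hs : support_fun B v <= g1 + n%:R * k%:~R.
    apply: sup_le; first by exists x.
    move=> y By; rewrite dotz_add; have := Hn y By.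
    rewrite -!dotz_lin; lra.
  have Hf : Num.floor (support_fun B v) <= Num.floor g0 + n%:Z * k.
    apply: le_trans (le_floor Hs) _.
    have -> : (n%:R * k%:~R : R) = (n%:Z * k)%:~R by rewrite intrM.
    rewrite floorDrz ?intr_int // intrKfloor lerD2r.
    by rewrite -ltzD1 floor_lt_int intrD1.
  have Hf' : (Num.floor (support_fun B v))%:~R <=
      (Num.floor g0 + n%:Z * k)%:~R :> R by rewrite ler_int.
  have := le_trans Hv Hf'.
  rewrite dotz_add Hax intrD intrM /=.
  have -> : ((n%:Z)%:~R : R) = n%:R by [].
  lra.
have HL1 : CG_list (B1 `&` [set x | dotz a x = k%:~R]) L = set0.
  apply/seteqP; split => // x Hx.
  have := CGl_mono (L:=L) sub (fun y Hy => Fb y (CG_sub Hy)).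
  move=> /(_ x Hx); by rewrite -CGl_cons HL.
have [L' [sL' HL']] := IH B1 (CG_closed (a:=v) Bc) B1b
  (fun x Bx => Ha x (CG_sub Bx)) HL1.
exists (v :: L'); split; first by rewrite /= sL'.
by move=> x; rewrite CGl_cons; apply: HL'.
Qed.
End Frame.


Section Branch.
Variables (R : realType) (E : finType).
Local Notation PT := (PT R E).
Local Notation box := (@box R E).

Lemma branch (P : set (E -> R)) (a : E -> int) (h : nat) (N : nat -> nat) :
  closed (P : set PT) -> P `<=` box ->
  (forall x, P x -> 0 <= dotz a x <= h%:R) ->
  (forall k, (k <= h)%N -> Refutable (P `&` [set x | dotz a x = k%:R]) (N k)) ->
  Refutable P (\sum_(k < h.+1) (N k).+1).
Proof.
move=> Pc Pb Pa HN.
have main : forall j, (j <= h.+1)%N -> exists L,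
    (size L <= \sum_(h.+1 - j <= k < h.+1) (N k).+1)%N /\
    forall x, CG_list P L x -> dotz a x <= (h%:Z - j%:Z)%:~R.
  elim=> [|j IH] jh.
    exists [::]; split; first by rewrite subn0 big_geq.
    move=> x /= Px; rewrite subr0; have /andP[_ ->] := Pa x Px; by [].
  have [L [sL HL]] := IH (ltnW jh).
  set B := CG_list P L.
  have Bc : closed (B : set PT) by apply: CGl_closed.
  have Bb : B `<=` box by move=> x /CGl_sub /Pb.
  have [L1 [sL1 HL1]] : Refutable (B `&` [set x | dotz a x = (h%:Z - j%:Z)%:~R]) (N (h - j)%N).
    apply: (@ref_mono _ _ _ (P `&` [set x | dotz a x = (h - j)%N%:R])).
    - move=> x [Bx Hx]; split; first exact: CGl_sub Bx.
      have e : (h%:Z - j%:Z) = (h - j)%N :> int by lia.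
      by rewrite /= Hx e.
    - by move=> x [/Pb].
    - by apply: HN; apply: leq_subr.
  have [L1' [sL1' HL1']] := face_lemma Bc Bb HL HL1.
  exists (L ++ L1'); split.
    rewrite size_cat sL1'.
    have -> : (h.+1 - j.+1 = h - j)%N by rewrite subSS.
    rewrite big_ltn; last by rewrite ltn_subLR ?addnS ?ltnS ?leq_addl // -ltnS.
    have -> : (h - j).+1 = (h.+1 - j)%N by rewrite subSn // -ltnS.
    lia.
  move=> x; rewrite CGl_cat => /HL1'.
  have -> : (h%:Z - j%:Z - 1) = h%:Z - j.+1%:Z by lia.
  by [].
have [L [sL HL]] := main h.+1 (leqnn _).
exists L; split; first by rewrite subnn big_mkord in sL.
apply/seteqP; split => // x Hx.
have := HL x Hx; have /andP[H0 _] := Pa x (CGl_sub Hx).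
have -> : (h%:Z - h.+1%:Z) = -1 by lia.
move=> H1; have := le_trans H0 H1.
by rewrite (_ : (-1 : int)%:~R = -1 :> R) //; lra.
Qed.
End Branch.


Section Gen.
Variables (R : realType) (E : finType).
Local Notation PT := (PT R E).
Local Notation box := (@box R E).

Definition ind (S : {set E}) : E -> int := fun e => ((e \in S) : nat)%:Z.

Lemma dotz_ind S (x : E -> R) : dotz (ind S) x = \sum_(e in S) x e.
Proof.
rewrite /dotz (big_mkcond (fun e => e \in S)) /=; apply: eq_bigr => e _.
by rewrite /ind; case: (e \in S) => /=; rewrite ?mul1r ?mul0r.
Qed.

Lemma dotz_ind_bnd S (x : E -> R) : box x -> 0 <= dotz (ind S) x <= #|E|%:R.
Proof.
move=> bx; rewrite dotz_ind; apply/andP; split.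
  by apply: sumr_ge0 => e _; have /andP[] := bx e.
apply: (@le_trans _ _ (\sum_(e in S) (1 : R))).
  by apply: ler_sum => e _; have /andP[] := bx e.
by rewrite sumr_const ler_nat max_card.
Qed.

Lemma sum_cont (s : seq E) (P : pred E) (f : E -> PT -> R) :
  (forall i, continuous (f i)) ->
  continuous (fun x : PT => \sum_(i <- s | P i) f i x).
Proof.
move=> fc; elim: s => [|i s IH].
  have -> : (fun x : PT => \sum_(i <- [::] | P i) f i x) = cst 0.
    by apply: funext => y; rewrite big_nil.
  exact: cst_continuous.
case Pi : (P i).
  have -> : (fun x0 : PT => \sum_(j <- i :: s | P j) f j x0) =
    (f i + (fun x0 : PT => \sum_(j <- s | P j) f j x0)).
    by apply: funext => y; rewrite big_cons Pi.
  by move=> x; apply: continuousD; [apply: fc | apply: IH].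
have -> : (fun x0 : PT => \sum_(j <- i :: s | P j) f j x0) =
    (fun x0 : PT => \sum_(j <- s | P j) f j x0).
  by apply: funext => y; rewrite big_cons Pi.
exact: IH.
Qed.

Lemma coord_cont i : continuous (fun x : PT => x i).
Proof. exact: (@proj_continuous E (fun _ => R) i). Qed.

Lemma box_closed : closed (box : set PT).
Proof.
have -> : (box : set PT) = \bigcap_(i in [set: E])
    ([set x : PT | 0 <= x i] `&` [set x : PT | 0 <= 1 - x i]).
  apply/seteqP; split => x /=.
    by move=> H i _; have /andP[? ?] := H i; split => //=; rewrite subr_ge0.
  by move=> H i; have [? ?] := H i I; apply/andP; split => //; rewrite -subr_ge0.
apply: closed_bigI => i _; apply: closedI; apply: closed_ge_lin => //.
  exact: coord_cont.
move=> x; apply: continuousB; first exact: cst_continuous.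
exact: coord_cont.
Qed.

Lemma leaf_gen (D : seq E) : forall (P : set (E -> R)),
  closed (P : set PT) -> P `<=` box ->
  (forall alpha : E -> bool, forall x, P x -> (forall e, e \in D -> x e = (alpha e)%:R) -> False) ->
  Refutable P (2 ^ (size D).+1 - 2).
Proof.
elim: D => [|e D IH] P Pc Pb H.
  by apply: ref_empty => x Px; apply: (H (fun=> false) x Px).
have -> : (2 ^ (size (e :: D)).+1 - 2 = \sum_(k < 1.+1) (2 ^ (size D).+1 - 2).+1)%N.
  rewrite big_ord_recr big_ord1 /= expnS.
  have : (2 <= 2 ^ (size D).+1)%N by rewrite expnS leq_pmulr ?expn_gt0.
  lia.
apply: (branch (P:=P) (a:=ind [set e]) (h:=1) (N:=fun=> (2 ^ (size D).+1 - 2)%N)) => //.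
  move=> x Px; rewrite dotz_ind big_set1; have /andP[-> ->] := Pb x Px e; by [].
move=> k k1; apply: IH.
- apply: closedI => //.
  have -> : [set x : E -> R | dotz (ind [set e]) x = k%:R] = [set x : PT | dotz (ind [set e]) x = k%:R] by [].
  by apply: closed_dotz_eq.
- by move=> x [/Pb].
- move=> alpha x [Px Hx] Ha.
  apply: (H (fun e' => if e' == e then k == 1%N else alpha e') x Px) => e'.
  rewrite inE => /orP [/eqP ->|e'D].
    rewrite eqxx; move: Hx; rewrite /= dotz_ind big_set1 => ->.
    by case: k k1 => [|[|]].
  case: eqP => [->|_]; last by apply: Ha.
  move: Hx; rewrite /= dotz_ind big_set1 => ->.
  by case: k k1 => [|[|]].
Qed.

End Gen.


Section Ts.
Variables (R : realType) (V : finType) (adj : rel V) (l : V -> bool).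
Hypothesis Hg : simple_graph adj.
Local Notation E := (edge adj).
Local Notation PT := (PT R E).
Local Notation box := (@box R E).

Definition Kt : set (E -> R) := @sat_polytope R E (tseitin adj l).

Lemma Kt_box : Kt `<=` box. Proof. by move=> x []. Qed.

Lemma Kt_closed : closed (Kt : set PT).
Proof.
have -> : (Kt : set PT) = (box : set PT) `&` \bigcap_(C in [set C | C \in tseitin adj l])
   [set x : PT | 1 <= \sum_(i in C.1) x i + \sum_(i in C.2) (1 - x i)].
  apply/seteqP; split => x.
    by move=> [H1 H2]; split => // C; apply: H1.
  by move=> [H1 H2]; split => // C; apply: H2.
apply: closedI; first exact: box_closed.
apply: closed_bigI => C _; apply: closed_ge_lin.
move=> x; apply: continuousD.
  by apply: sum_cont => i; apply: coord_cont.
apply: (@sum_cont R E _ _ (fun i x => 1 - x i)) => i y.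
apply: continuousB; first exact: cst_continuous.
exact: coord_cont.
Qed.

Definition dlt (T : {set V}) : {set E} := [set e : E | #|val e :&: T| == 1%N].
Definition betw (T1 T2 : {set V}) : {set E} :=
  [set e : E | (#|val e :&: T1| == 1%N) && (#|val e :&: T2| == 1%N)].
Definition lsumT (T : {set V}) : nat := (\sum_(v in T) (l v : nat))%N.

Lemma edge_card (e : E) : #|val e| = 2%N.
Proof.
have := valP e; rewrite /is_edge => /existsP [u /existsP [v /andP [a /eqP ->]]].
rewrite cards2; case: eqP => // uv; move: a; rewrite uv.
by case: Hg => _ ->.
Qed.

Lemma ind_id (p q : nat) : (p + q <= 2)%N ->
  (((p == 1%N) : nat)%:Z + ((q == 1%N) : nat)%:Z =
   ((p + q == 1%N) : nat)%:Z + 2 * (((p == 1%N) && (q == 1%N)) : nat)%:Z)%R.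
Proof. by case: p => [|[|[|p]]]; case: q => [|[|[|q]]]. Qed.

Lemma dlt_split (T1 T2 : {set V}) (x : E -> R) : T1 :&: T2 = finset.set0 ->
  dotz (ind (dlt T1)) x + dotz (ind (dlt T2)) x =
  dotz (ind (dlt (T1 :|: T2))) x + 2 * dotz (ind (betw T1 T2)) x.
Proof.
move=> dis; rewrite /dotz mulr_sumr -!big_split; apply: eq_bigr => e _ /=.
set A := val e.
have Hc : #|A :&: (T1 :|: T2)| = (#|A :&: T1| + #|A :&: T2|)%N.
  rewrite finset.setIUr cardsU.
  have -> : (A :&: T1) :&: (A :&: T2) = finset.set0.
    apply/setP => y; rewrite !inE; apply/negP => /andP [/andP [_ y1] /andP [_ y2]].
    have : y \in T1 :&: T2 by rewrite !inE y1 y2.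
    by rewrite dis inE.
  by rewrite cards0 subn0.
have Hle : (#|A :&: T1| + #|A :&: T2| <= 2)%N.
  by rewrite -Hc -(edge_card e); apply: subset_leq_card; apply: finset.subsetIl.
rewrite /ind !inE Hc.
have := congr1 (fun z : int => (z%:~R : R) * x e) (ind_id Hle).
rewrite /= !intrD !intrM !mulrDl => ->.
by rewrite mulrA.
Qed.

Lemma cardI1 (A : {set V}) v : #|A :&: [set v]%SET| = (v \in A) :> nat.
Proof.
case: (boolP (v \in A)) => H.
  have -> : A :&: [set v]%SET = [set v]%SET.
    by apply/setP => y; rewrite !inE; case: (y =P v) => [->|_]; rewrite ?H ?andbT ?andbF.
  by rewrite cards1.
have -> : A :&: [set v]%SET = finset.set0.
  by apply/setP => y; rewrite !inE; case: (y =P v) => [->|_]; rewrite ?(negbTE H) ?andbT ?andbF.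
by rewrite cards0.
Qed.

Lemma dlt1 v : dlt [set v]%SET = incident adj v.
Proof. by apply/setP => e; rewrite !inE cardI1; case: (v \in val e). Qed.

Local Notation Dl := (max_degree adj).

Lemma leaf_ts v (k : int) : ((k - (l v : nat)%:Z) %% 2)%Z = 1 ->
  Refutable (Kt `&` [set x | dotz (ind (dlt [set v]%SET)) x = k%:~R]) (2 ^ Dl.+1).
Proof.
move=> Hk.
apply: (@ref_le _ _ _ (2 ^ (size (enum (incident adj v))).+1 - 2)).
  apply: leq_trans (leq_subr _ _) _; rewrite leq_exp2l // ltnS -cardE.
  by apply: (@leq_bigmax _ (fun v => degree adj v)).
apply: leaf_gen.
- apply: closedI; first exact: Kt_closed.
  exact: closed_dotz_eq.
- by move=> x [/Kt_box].
move=> alpha x [Kx Hx] Ha.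
set A := [set e in incident adj v | alpha e].
have HA : \sum_(e in incident adj v) x e = #|A|%:R.
  rewrite (bigID alpha) /= [X in _ + X]big1 ?addr0; last first.
    move=> e /andP [eI /negbTE na]; rewrite Ha ?mem_enum // na //.
  rewrite -sumr_const; apply: eq_big => e.
    by rewrite !inE.
  by move=> /andP [eI ae]; rewrite Ha ?mem_enum // ae.
move: Hx; rewrite /= dlt1 dotz_ind HA => HkA.
have kA : k = #|A|%:Z by apply: (@intr_inj R); rewrite -HkA.
have par : odd #|A| != l v.
  by move: Hk; rewrite kA; case: (l v) => /=; lia.
have HC : (incident adj v :\: A, A) \in tseitin adj l.
  rewrite inE; apply/existsP; exists v; apply/existsP; exists A.
  apply/and3P; split => //.
  by apply/fintype.subsetP => e; rewrite inE => /andP [].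
have := Kx.1 _ HC => /=.
rewrite big1; last first.
  move=> e; rewrite !inE => /andP [nA eI].
  rewrite Ha; last by rewrite mem_enum inE.
  by move: nA; rewrite eI /=; case: (alpha e).
rewrite big1; last first.
  move=> e; rewrite !inE => /andP [eI ae].
  by rewrite Ha ?ae ?subrr // mem_enum inE.
by rewrite addr0 ler10.
Qed.

End Ts.


Section Claim.
Variables (R : realType) (V : finType) (adj : rel V) (l : V -> bool).
Hypothesis Hg : simple_graph adj.
Local Notation E := (edge adj).
Local Notation PT := (PT R E).
Local Notation box := (@box R E).
Local Notation Dl := (max_degree adj).
Local Notation Kt := (@Kt R V adj l).
Local Notation lsum := (lsumT l).
Local Notation dlt := (@dlt V adj).
Local Notation betw := (@betw V adj).

Definition Mm := (#|E|).+1.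
Fixpoint Fb (d : nat) : nat :=
  if d is d'.+1 then (Mm * (Mm * (Fb d').+1).+1)%N else (2 ^ Dl.+1)%N.

Lemma Fb_step d : (Fb d < Mm * (Fb d).+1)%N.
Proof. rewrite /Mm mulSn; nia. Qed.

Lemma Fb_mono d : (Fb d <= Fb d.+1)%N.
Proof.
rewrite /=; apply: leq_trans (ltnW (Fb_step d)) _.
by apply: leq_trans (leqnSn _) (leq_pmull _ _).
Qed.

Lemma split_set (T : {set V}) s : (s <= #|T|)%N ->
  exists T1 : {set V}, T1 \subset T /\ #|T1| = s.
Proof.
move=> sT; exists [set x in take s (enum T)]; split.
  by apply/fintype.subsetP => x; rewrite inE => /mem_take; rewrite mem_enum.
rewrite cardsE; move/card_uniqP: (take_uniq s (enum_uniq (mem T))) => ->.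
by rewrite size_takel // -cardE.
Qed.

Lemma lsumU (T1 T2 : {set V}) : T1 :&: T2 = finset.set0 ->
  lsum (T1 :|: T2) = (lsum T1 + lsum T2)%N.
Proof.
move=> dis; rewrite /lsumT (eq_bigl [predU T1 & T2]); last first.
  by move=> y; rewrite !inE.
by rewrite bigU // -setI_eq0 dis.
Qed.

Lemma claim d : forall (T : {set V}) (k : int), (0 < #|T|)%N -> (#|T| <= 2 ^ d)%N ->
  ((k - (lsum T)%:Z) %% 2)%Z = 1 ->
  Refutable (Kt `&` [set x | dotz (ind (dlt T)) x = k%:~R]) (Fb d).
Proof.
elim: d => [|d IH] T k T0 Td Hk.
  have /cards1P [v Tv] : #|T| == 1%N by rewrite eqn_leq Td T0.
  rewrite Tv in Hk *.
  apply: (leaf_ts R adj) => //.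
  by move: Hk; rewrite /lsumT big_set1.
case: (leqP #|T| (2 ^ d)) => h.
  by apply: (ref_le (Fb_mono d)); apply: IH.
have t2 : (2 <= #|T|)%N by apply: leq_ltn_trans h; rewrite expn_gt0.
have [T1 [T1T cT1]] := split_set (leq_div #|T| 2).
set T2 := T :\: T1.
have cT2 : #|T2| = (#|T| - #|T| %/ 2)%N.
  have e : T :&: T1 = T1 by apply/finset.setIidPr.
  by rewrite cardsD e cT1.
have HT : T1 :|: T2 = T.
  apply/setP => y; rewrite !inE; case: (boolP (y \in T1)) => //= y1.
  by rewrite (fintype.subsetP T1T _ y1).
have dis : T1 :&: T2 = finset.set0.
  by apply/setP => y; rewrite !inE; case: (y \in T1); rewrite ?andbF.
have lsT : lsum T = (lsum T1 + lsum T2)%N by rewrite -HT lsumU.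
move: Td; rewrite expnS => Td.
have c1 : (0 < #|T1| <= 2 ^ d)%N by rewrite cT1; apply/andP; split; lia.
have c2 : (0 < #|T2| <= 2 ^ d)%N by rewrite cT2; apply/andP; split; lia.
have Pc : closed (Kt `&` [set x | dotz (ind (dlt T)) x = k%:~R] : set PT).
  by apply: closedI; [apply: (@Kt_closed R V adj l) | apply: closed_dotz_eq].
have Pb : Kt `&` [set x | dotz (ind (dlt T)) x = k%:~R] `<=` box.
  by move=> x [/(@Kt_box R V adj l)].
have -> : Fb d.+1 = (\sum_(j < #|E|.+1) (Mm * (Fb d).+1).+1)%N.
  by rewrite sum_nat_const card_ord.
apply: (branch (a := ind (dlt T1)) (h := #|E|) (N := fun=> (Mm * (Fb d).+1)%N)) => //.
  by move=> x /Pb bx; apply: dotz_ind_bnd.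
move=> j jE.
case Hj : (((j%:Z - (lsum T1)%:Z) %% 2)%Z == 1).
  apply: (ref_le (ltnW (Fb_step d))).
  apply: (ref_mono (Q := Kt `&` [set x | dotz (ind (dlt T1)) x = (j%:Z)%:~R])).
  - by move=> x [[Kx _] Hx]; split.
  - by move=> x [/(@Kt_box R V adj l)].
  apply: IH; first by case/andP: c1.
    by case/andP: c1.
  by apply/eqP.
have -> : (Mm * (Fb d).+1 = \sum_(j3 < #|E|.+1) (Fb d).+1)%N.
  by rewrite sum_nat_const card_ord.
apply: (branch (a := ind (betw T1 T2)) (h := #|E|) (N := fun=> Fb d)).
- apply: closedI => //; apply: closed_dotz_eq.
- by move=> x [/Pb].
- by move=> x [/Pb bx _]; apply: dotz_ind_bnd.
move=> j3 j3E.
apply: (ref_mono (Q := Kt `&` [set x | dotz (ind (dlt T2)) x = (k + 2 * j3%:Z - j%:Z)%:~R])).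
- move=> x [[[Kx HxT] Hx1] HxB]; split => //=.
  have := dlt_split Hg x dis; rewrite HT.
  move: HxT Hx1 HxB; rewrite /= => -> -> ->.
  rewrite !intrD !intrN intrM /=.
  have -> : ((j3%:Z)%:~R : R) = j3%:R by [].
  have -> : ((j%:Z)%:~R : R) = j%:R by [].
  lra.
- by move=> x [/(@Kt_box R V adj l)].
apply: IH; first by case/andP: c2.
  by case/andP: c2.
move/negbT: Hj => Hj; move: Hk; rewrite lsT; move: Hj; lia.
Qed.

End Claim.


Section Bnd.
Variables (V : finType) (adj : rel V).
Hypothesis Hg : simple_graph adj.
Local Notation E := (edge adj).
Local Notation Dl := (max_degree adj).

Lemma Fb_bound d : ((Fb adj d).+1 <= 2 ^ Dl.+2 * (3 * (Mm adj) ^ 2) ^ d)%N.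
Proof.
elim: d => [|d IH] /=.
  rewrite expn0 muln1 [X in (_ <= X)%N]expnS.
  have : (0 < 2 ^ Dl.+1)%N by rewrite expn_gt0.
  lia.
set M := Mm adj; set G := (Fb adj d).+1.
have M1 : (1 <= M)%N by [].
have G1 : (1 <= G)%N by [].
have h1 : ((M * (M * G).+1).+1 <= 3 * M ^ 2 * G)%N by nia.
apply: leq_trans h1 _.
rewrite [((3 * M ^ 2) ^ d.+1)%N]expnS mulnCA; exact: leq_mul.
Qed.

Lemma E_bound : (#|E| <= #|V| * Dl)%N.
Proof.
have h2 : (\sum_(v : V) #|incident adj v| = 2 * #|E|)%N.
  transitivity (\sum_(v : V) \sum_(e : E) ((v \in val e) : nat))%N.
    apply: eq_bigr => v _; rewrite -sum1_card big_mkcond /=.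
    by apply: eq_bigr => e _; rewrite inE; case: (v \in val e).
  rewrite exchange_big /= (eq_bigr (fun=> 2%N)); last first.
    move=> e _; rewrite -(edge_card Hg e) -sum1_card [RHS]big_mkcond /=.
    by apply: eq_bigr => v _; case: (v \in val e).
  by rewrite sum_nat_const mulnC.
have h3 : (\sum_(v : V) #|incident adj v| <= #|V| * Dl)%N.
  apply: (@leq_trans (\sum_(v : V) Dl)%N).
    by apply: leq_sum => v _; apply: (@leq_bigmax _ (fun v => degree adj v)).
  by rewrite sum_nat_const.
lia.
Qed.

End Bnd.

Lemma ln2_ge (R : realType) : (1/2 : R) <= ln 2.
Proof.
have lt : (-1 : R) < - (1/2) by lra.
have h := le_ln1Dx lt.
have e : 1 + - (1/2) = (2 : R)^-1 by field.
rewrite e lnV in h; last by rewrite posrE.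
lra.
Qed.

Lemma exp_mono (a b d : nat) : (a <= b)%N -> (a ^ d <= b ^ d)%N.
Proof.
move=> ab; elim: d => [|d IH]; first by rewrite !expn0.
by rewrite !expnS leq_mul.
Qed.

Theorem theorem1p3 :
  exists c : nat,
  forall (R : realType) (V : finType) (adj : rel V) (l : V -> bool),
    simple_graph adj ->
    odd (\sum_(v : V) (l v : nat))%N ->
    exists L : seq (edge adj -> int),
      CG_list (@sat_polytope R _ (tseitin adj l)) L = set0 /\
      ((size L)%:R : R) <= 2 ^+ max_degree adj *
        (((#|V| * max_degree adj)%N)%:R `^ (c%:R * ln (#|V|%:R))).
Proof.
exists 28%N => R V adj l Hg Hodd.
set Dl := max_degree adj.
have [v lv] : exists v, l v.
  apply: contrapT => H; move: Hodd; rewrite big1 // => v _.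
  by case: (boolP (l v)) => // lv; exfalso; apply: H; exists v.
case: (posnP Dl) => [D0 | Dpos].
  exists [::]; split.
    have inc0 : incident adj v = finset.set0.
      apply/eqP; rewrite -cards_eq0 -leqn0 -D0.
      by apply: (@leq_bigmax _ (fun v => degree adj v)).
    have HC : (finset.set0, finset.set0) \in tseitin adj l.
      rewrite inE; apply/existsP; exists v; apply/existsP; exists finset.set0.
      apply/and3P; split; first by rewrite finset.sub0set.
        by rewrite cards0 lv.
      by rewrite inc0 finset.setD0.
    apply/seteqP; split => // x [Hc _] /=.
    by have := Hc _ HC; rewrite /= !big_set0 addr0 ler10.
  by rewrite /= mulr_ge0 // ?exprn_ge0 // powR_ge0.
set n := #|V|.
have [w Hw] : exists w, (0 < degree adj w)%N.
  apply: contrapT => H; move: Dpos; rewrite /Dl /max_degree.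
  rewrite (_ : \max_(v0 : V) degree adj v0 = 0)%N //.
  apply/eqP; rewrite -leqn0; apply/bigmax_leqP => u _.
  rewrite leqn0; apply/negPn/negP => Hu; apply: H; exists u; by rewrite lt0n.
have n2 : (2 <= n)%N.
  move: Hw; rewrite /degree card_gt0 => /set0Pn [e _].
  rewrite /n -cardsT -(edge_card Hg e); apply: subset_leq_card; exact: finset.subsetT.
set X := (n * Dl)%N.
have X2 : (2 <= X)%N by rewrite /X; nia.
set t := trunc_log 2 n.
have tn : (2 ^ t <= n)%N by apply: trunc_logP => //; lia.
have nd : (n <= 2 ^ t.+1)%N by apply: ltnW; apply: trunc_log_ltn.
have par : ((0 - (lsumT l [set: V]%SET)%:Z) %% 2)%Z = 1.
  rewrite /lsumT (eq_bigl (fun _ => true)); last by move=> u; rewrite inE.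
  by move: Hodd; lia.
have c1 : (0 < #|[set: V]%SET|)%N by rewrite cardsT; lia.
have c2 : (#|[set: V]%SET| <= 2 ^ t.+1)%N by rewrite cardsT.
have [L [sL HL]] := @claim R V adj l Hg t.+1 [set: V]%SET 0 c1 c2 par.
exists L; split.
  rewrite -HL; congr CG_list.
  have dl0 : dlt adj [set: V]%SET = finset.set0.
    apply/setP => e; rewrite !inE finset.setIT (edge_card Hg e) //.
  apply/seteqP; split => x //=.
    move=> Kx; split => //=.
    by rewrite dl0 dotz_ind big_set0.
  by move=> [].
have b1 := leq_ltn_trans sL (Fb_bound adj t.+1).
have hM : (Mm adj <= X.+1)%N by rewrite /Mm ltnS; apply: E_bound.
have b2 : (3 * Mm adj ^ 2 <= X ^ 6)%N.
  have e1 : (3 * Mm adj ^ 2 <= 3 * X.+1 ^ 2)%N by rewrite leq_mul2l exp_mono ?orbT.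
  apply: leq_trans e1 _.
  have e2 : (X.+1 <= 2 * X)%N by lia.
  have e3 : (3 * X.+1 ^ 2 <= 12 * X ^ 2)%N.
    have := exp_mono 2 e2; rewrite expnMn; lia.
  apply: leq_trans e3 _.
  have e4 : (4 <= X ^ 2)%N by have := exp_mono 2 X2; rewrite expnSr mulnC.
  have e5 : (16 <= X ^ 4)%N.
    have := leq_mul e4 e4; rewrite -expnD.
    by [].
  have -> : (X ^ 6 = X ^ 4 * X ^ 2)%N by rewrite -expnD.
  by apply: leq_mul => //; apply: leq_trans e5.
have b3 : ((3 * Mm adj ^ 2) ^ t.+1 <= X ^ (6 * t.+1))%N.
  by rewrite expnM; apply: exp_mono.
have b4 : (2 ^ Dl.+2 <= 2 ^ Dl * X ^ 2)%N.
  have -> : (2 ^ Dl.+2 = 4 * 2 ^ Dl)%N by rewrite !expnS mulnA.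
  rewrite mulnC; apply: leq_mul => //.
  by have := exp_mono 2 X2; rewrite expnSr mulnC.
have bN : (size L <= 2 ^ Dl * X ^ (6 * t.+1 + 2))%N.
  apply: ltnW; apply: leq_trans b1 _.
  apply: leq_trans (leq_mul b4 b3) _.
  by rewrite expnD -mulnA [(X ^ 2 * _)%N]mulnC.
apply: (@le_trans _ _ ((2 ^ Dl * X ^ (6 * t.+1 + 2))%N%:R)).
  by rewrite ler_nat.
rewrite natrM natrX natrX.
have X0 : (0 : R) <= X%:R by [].
rewrite -[X%:R ^+ _]powR_mulrn //.
apply: ler_wpM2l; first by apply: exprn_ge0.
apply: ler_powR; first by rewrite (_ : (1 : R) = 1%:R) // ler_nat; lia.
have l2 := @ln2_ge R.
have n0 : (0 : R) < n%:R by rewrite ltr0n; lia.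
have hn : ln (2 : R) <= ln n%:R.
  rewrite ler_ln ?posrE //.
  by rewrite ler_nat.
have ht : t%:R * ln (2 : R) <= ln (n%:R : R).
  apply: le_trans (_ : ln ((2 ^ t)%N%:R : R) <= _).
    by rewrite natrX lnXn // mulr_natl.
  by rewrite ler_ln ?posrE ?ler_nat // ltr0n expn_gt0.
have ht2 : t%:R * (1/2) <= t%:R * ln (2 : R).
  by rewrite ler_wpM2l.
rewrite natrD natrM -addn1 natrD.
lra.
Qed.
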